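(* If $G$ is a circulant graph, then $\operatorname{stww}(G)\leq 3\Delta(G)+1$.
   Context: All graphs are finite and simple. A graph $G$ is circulant if there is an automorphism $\varphi$ of $G$ such that for any two vertices $v,w$ there is $j\in\mathbb{N}$ with $\varphi^j(v)=w$. $\Delta(G)$ is the maximum degree. A trigraph is a graph whose edges are each colored red or black; a graph is viewed as a trigraph with all edges black. The red degree of a vertex is the number of red edges incident to it. For a partition $\mathcal{P}$ of $V(G)$, the quotient trigraph $G/\mathcal{P}$ has vertex set $\mathcal{P}$; two distinct parts $U,W$ are joined by a black edge if every pair $\{u,w\}$ with $u\in U,w\in W$ is a black edge of $G$, are non-adjacent if no such pair is an edge of $G$, and are joined by a red edge otherwise. A contraction sequence of an $n$-vertex trigraph $G$ is a sequence $\mathcal{P}_n,\dots,\mathcal{P}_1$ of partitions of $V(G)$ where $\mathcal{P}_n$ is the partition into singletons and each $\mathcal{P}_i$ arises from $\mathcal{P}_{i+1}$ by merging two parts; its width is the maximum red degree over all $G/\mathcal{P}_i$, and the twin-width $\operatorname{tww}(G)$ is the minimum width of a contraction sequence. The sparse twin-width is $\operatorname{stww}(G)\coloneqq\operatorname{tww}(G_{\mathrm{red}})$, where $G_{\mathrm{red}}$ is the trigraph obtained from $G$ by coloring all edges red. *)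

(* Defs.v *)
From mathcomp Require Import all_boot fingroup perm.
Set Implicit Arguments. Unset Strict Implicit. Unset Printing Implicit Defensive.

Section TwinWidth.
Variable T : finType.

(* A simple graph on T is a symmetric irreflexive relation e : rel T. *)

Definition is_automorphism (e : rel T) (phi : {perm T}) : Prop :=
  forall x y, e (phi x) (phi y) = e x y.

Definition circulant (e : rel T) : Prop :=
  exists phi : {perm T}, is_automorphism e phi /\
    forall v w : T, exists j : nat, iter j phi v = w.

Definition max_degree (e : rel T) : nat := \max_(v : T) #|[set w | e v w]|.

Record trigraph := Trigraph { black : rel T; red : rel T }.

Definition tedge (G : trigraph) (u w : T) : bool := black G u w || red G u w.

(* Red edge between two parts U, W of the quotient trigraph. *)
Definition qred (G : trigraph) (U W : {set T}) : bool :=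
  [&& U != W,
      ~~ [forall u in U, forall w in W, black G u w] &
      [exists u in U, exists w in W, tedge G u w]].

Definition red_degree (G : trigraph) (P : {set {set T}}) (U : {set T}) : nat :=
  #|[set W in P | qred G U W]|.

Definition max_red_degree (G : trigraph) (P : {set {set T}}) : nat :=
  \max_(U in P) red_degree G P U.

Definition singletons : {set {set T}} := [set [set x] | x : T].

Definition merge_step (P Q : {set {set T}}) : bool :=
  [exists A in P, exists B in P,
     (A != B) && (Q == ((P :\ A) :\ B) :|: [set A :|: B])].

(* A contraction sequence P_n, ..., P_1 (listed from P_n), n = #|T|. *)
Definition contraction_seq (s : #|T|.-tuple {set {set T}}) : bool :=
  (0 < #|T|) ==>
   ((nth set0 s 0 == singletons) &&
   [forall i : 'I_#|T|.-1, merge_step (nth set0 s i) (nth set0 s i.+1)]).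

Definition cs_width (G : trigraph) (s : seq {set {set T}}) : nat :=
  \max_(P <- s) max_red_degree G P.

(* Twin-width: minimum width of a contraction sequence
   (the default #|T| is never smaller than a width, and contraction
   sequences always exist). *)
Definition tww (G : trigraph) : nat :=
  \big[minn/#|T|]_(s : #|T|.-tuple {set {set T}} | contraction_seq s)
     cs_width G s.

Definition red_trigraph (e : rel T) : trigraph :=
  Trigraph (fun _ _ => false) e.

Definition stww (e : rel T) : nat := tww (red_trigraph e).

End TwinWidth.

(* Main.v *)
Require Import Defs.
From mathcomp Require Import all_boot fingroup perm zify.
Set Implicit Arguments. Unset Strict Implicit. Unset Printing Implicit Defensive.

Lemma mod_split n c j : c < n -> j < n ->
  (c + j < n -> (c + j) %% n = c + j) /\ (n <= c + j -> (c + j) %% n = c + j - n).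
Proof.
move=> Hc Hj; split=> H; first by rewrite modn_small.
have -> : c + j = (c + j - n) + n by lia.
by rewrite modnDr modn_small; lia.
Qed.

Lemma dvd_step L p q : 0 < L -> L %| p -> L %| q -> p < q -> p + L <= q.
Proof.
move=> HL Hp Hq; rewrite -(divnK Hp) -(divnK Hq) ltn_pmul2r // => H.
by rewrite addnC -mulSn leq_pmul2r.
Qed.

Lemma filt_bound n L c l : 0 < L -> c < n -> l <= L * 2 -> l <= n ->
  size [seq j <- iota 1 l.-1 | ((c + j) %% n != 0) && (L %| (c + j) %% n)] <= 2.
Proof.
move=> HL Hc Hl Hn.
set s := filter _ _.
have Hs : sorted ltn s by apply: sorted_filter; [exact: ltn_trans | exact: iota_ltn_sorted].
have Hm : forall j, j \in s -> [/\ 1 <= j, j < l, (c + j) %% n != 0 & L %| (c + j) %% n].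
  move=> j; rewrite mem_filter mem_iota => /andP [/andP [H1 H2] /andP [H3 H4]].
  by split => //; lia.
case Es: s Hs Hm => [|j1 [|j2 [|j3 r]]] //= Hs Hm.
exfalso.
case/and3P: Hs => h12 h23 _.
have [a1 b1 c1 d1] := Hm j1 (mem_head _ _).
have [a2 b2 c2 d2] : [/\ 1 <= j2, j2 < l, (c + j2) %% n != 0 & L %| (c + j2) %% n].
  by apply: Hm; rewrite !inE eqxx orbT.
have [a3 b3 c3 d3] : [/\ 1 <= j3, j3 < l, (c + j3) %% n != 0 & L %| (c + j3) %% n].
  by apply: Hm; rewrite !inE eqxx !orbT.
have [m1 m1'] := mod_split Hc (leq_trans b1 Hn).
have [m2 m2'] := mod_split Hc (leq_trans b2 Hn).
have [m3 m3'] := mod_split Hc (leq_trans b3 Hn).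
have s12 := dvd_step HL d1 d2.
have s23 := dvd_step HL d2 d3.
have z1 := dvd_step HL (dvdn0 L) d1.
have z2 := dvd_step HL (dvdn0 L) d2.
have z3 := dvd_step HL (dvdn0 L) d3.
move: c1 c2 c3 s12 s23 z1 z2 z3 m1 m1' m2 m2' m3 m3'.
move: ((c + j1) %% n) ((c + j2) %% n) ((c + j3) %% n) => p1 p2 p3.
rewrite -!lt0n => c1 c2 c3 s12 s23 z1 z2 z3 m1 m1' m2 m2' m3 m3'.
have {}z2 := z2 c2; have {}z3 := z3 c3.
case: (ltnP (c + j2) n) => w2.
  have e1 : p1 = c + j1 by apply: m1; apply: leq_ltn_trans w2; rewrite leq_add2l ltnW.
  have e2 := m2 w2.
  have h : p1 < p2 by rewrite e1 e2 ltn_add2l.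
  have {}h := s12 h; rewrite e1 e2 in h.
  case: (ltnP (c + j3) n) => w3.
    have e3 := m3 w3.
    have h' : p2 < p3 by rewrite e2 e3 ltn_add2l.
    have {}h' := s23 h'; rewrite e2 e3 in h'.
    clear -h h' a1 b3 Hl; lia.
  have e3 := m3' w3; rewrite e3 in z3.
  clear -h z3 w2 a1 b3 Hl; lia.
have e2 := m2' w2.
have w3 : n <= c + j3 by apply: leq_trans w2 _; rewrite leq_add2l ltnW.
have e3 := m3' w3.
have h' : p2 < p3 by rewrite e2 e3; clear -w2 h23; lia.
have {}h' := s23 h'; rewrite e2 e3 in h' z2.
clear -h' z2 w2 Hc b3 Hl; lia.
Qed.

Lemma card_bigcup_le (I U : finType) (A : {pred I}) (F : I -> {set U}) :
  #|\bigcup_(i in A) F i| <= \sum_(i in A) #|F i|.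
Proof.
apply: (big_rec2 (fun (X : {set U}) k => #|X| <= k)); first by rewrite cards0.
move=> i X k _ IH; apply: leq_trans (leq_card_setU _ _) _.
by rewrite leq_add2l.
Qed.

Lemma setU1r_helper (U : finType) (A B : {set U}) z : z \in A -> z \in A :|: B.
Proof. by move=> H; rewrite in_setU H. Qed.

Section Circ.
Variables (T : finType) (e : rel T) (phi : {perm T}) (x0 : T).
Hypothesis autP : forall x y, e (phi x) (phi y) = e x y.
Hypothesis cycP : forall w, exists j, iter j phi x0 = w.

Definition gg j := iter j phi x0.
Definition pos x := findex phi x0 x.

Lemma fconnP w : fconnect phi x0 w.
Proof. by have [j <-] := cycP w; apply: fconnect_iter. Qed.

Lemma order_n : fingraph.order phi x0 = #|T|.
Proof.
apply/eqP; rewrite eqn_leq max_card /=.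
rewrite /fingraph.order; apply: subset_leq_card; apply/subsetP => w _.
exact: fconnP.
Qed.

Lemma pos_lt x : pos x < #|T|.
Proof. by rewrite -order_n; apply: findex_max; apply: fconnP. Qed.

Lemma gg_pos x : gg (pos x) = x.
Proof. exact: iter_findex (fconnP x). Qed.

Lemma pos_gg j : j < #|T| -> pos (gg j) = j.
Proof. by rewrite -order_n => H; apply: findex_iter. Qed.

Lemma gg_addn j : gg (j + #|T|) = gg j.
Proof. by rewrite /gg iterD -order_n iter_order //; apply: perm_inj. Qed.

Lemma gg_mod j : gg (j %% #|T|) = gg j.
Proof.
rewrite [in RHS](divn_eq j #|T|) addnC.
elim: (j %/ #|T|) => [|k IH]; first by rewrite mul0n addn0.
by rewrite mulSn addnCA addnC gg_addn.
Qed.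

Lemma e_shift k a b : e (iter k phi a) (iter k phi b) = e a b.
Proof. by elim: k => [|k IH] //=; rewrite autP. Qed.

Lemma e_gg i j : i < #|T| -> j < #|T| ->
  e (gg i) (gg j) = e x0 (gg ((j + #|T| - i) %% #|T|)).
Proof.
move=> Hi Hj; rewrite gg_mod -(e_shift (#|T| - i)) /gg -!iterD.
have -> : #|T| - i + i = 0 + #|T| by lia.
have -> : #|T| - i + j = (j + #|T| - i) by lia.
by rewrite -/(gg (0 + #|T|)) gg_addn.
Qed.

Lemma pos_inj : injective pos.
Proof. by move=> x y H; rewrite -(gg_pos x) H gg_pos. Qed.



Definition fib (key : nat -> nat) (y : T) : {set T} :=
  [set x | key (pos x) == key (pos y)].
Definition Pk key : {set {set T}} := [set fib key y | y : T].

Lemma fib_self key y : y \in fib key y.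
Proof. by rewrite inE. Qed.

Lemma Pk_overlap key W1 W2 z : W1 \in Pk key -> W2 \in Pk key ->
  z \in W1 -> z \in W2 -> W1 = W2.
Proof.
case/imsetP => y1 _ -> /imsetP [y2 _ ->]; rewrite !inE => /eqP H1 /eqP H2.
by apply/setP => x; rewrite !inE -H1 H2.
Qed.

Section Width.
Variables (L : nat) (key : nat -> nat).
Hypothesis HL : 0 < L.
Hypothesis HA : forall p, 0 < p -> p < #|T| -> ~~ (L %| p) -> key p.-1 = key p.
Hypothesis HB : forall p q, p < #|T| -> q < #|T| -> key p = key q ->
  p %/ (L * 2) = q %/ (L * 2).

Let F := fib key x0.

Lemma count3 c l : c < #|T| -> l <= L * 2 -> l <= #|T| ->
  #|[set W in Pk key | (W != F) &&
      [exists j : 'I_l, gg ((c + j) %% #|T|) \in W]]| <= 3.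
Proof.
move=> Hc Hl Hn.
set M := [set W in _ | _].
pose pr (W : {set T}) := fun j => gg ((c + j) %% #|T|) \in W.
pose jW W := find (pr W) (iota 0 l).
have K1 : forall W, W \in M ->
    [/\ jW W < l, pr W (jW W) & forall j, j < jW W -> ~~ pr W j].
  move=> W; rewrite inE => /andP [_ /andP [_ /existsP [j Hj]]].
  have Hh : has (pr W) (iota 0 l).
    by apply/hasP; exists (val j) => //; rewrite mem_iota /= add0n ltn_ord.
  have Hlt : jW W < l by move: Hh; rewrite has_find size_iota.
  split => //.
    by have := nth_find 0 Hh; rewrite nth_iota.
  move=> i Hi; have := before_find 0 Hi; rewrite nth_iota ?add0n => [->//|].
  exact: ltn_trans Hi Hlt.
have inj : {in M &, injective jW}.
  move=> W1 W2 H1 H2 E.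
  have [_ p1 _] := K1 _ H1; have [_ p2 _] := K1 _ H2.
  move: H1 H2; rewrite !inE => /andP [P1 _] /andP [P2 _].
  by apply: (Pk_overlap P1 P2 p1); rewrite E.
set J := 0 :: [seq j <- iota 1 l.-1 | ((c + j) %% #|T| != 0) && (L %| (c + j) %% #|T|)].
have sub : {subset map jW (enum M) <= J}.
  move=> x /mapP [W]; rewrite mem_enum => WM ->.
  have [lt pW bef] := K1 _ WM.
  move: WM; rewrite inE => /andP [WP /andP [WF _]].
  case E0: (jW W) => [|j]; first by rewrite inE.
  rewrite inE; apply/orP; right.
  rewrite mem_filter mem_iota.
  have Hn0 : 0 < #|T| by exact: leq_ltn_trans Hc.
  have Hp : (c + j.+1) %% #|T| != 0.
    apply/eqP => H0; move: pW; rewrite /pr E0 H0 => H.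
    have FP : F \in Pk key by apply: imset_f.
    have := Pk_overlap WP FP H (fib_self key x0).
    by move/eqP: WF.
  have Hp' : (c + j) %% #|T| = ((c + j.+1) %% #|T|).-1.
    move: Hp; rewrite addnS modnS; case: ifP => //.
  have Hnp : ~~ pr W j by apply: bef; rewrite E0.
  have Hdv : L %| (c + j.+1) %% #|T|.
    apply/negPn/negP => nd.
    have Hpl : (c + j.+1) %% #|T| < #|T| by rewrite ltn_pmod.
    have Hp0 : 0 < (c + j.+1) %% #|T| by rewrite lt0n.
    have Hk := HA Hp0 Hpl nd.
    apply: (negP Hnp); move: pW; rewrite /pr E0.
    case/imsetP: WP => z _ ->; rewrite !inE.
    have Hpl' : (c + j) %% #|T| < #|T| by rewrite ltn_pmod.
    by rewrite !pos_gg // Hp' Hk.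
  rewrite Hp Hdv andbT; rewrite E0 in lt; apply/andP; split => //; lia.
rewrite cardE -(size_map jW).
apply: (leq_trans (uniq_leq_size _ sub)).
  rewrite map_inj_in_uniq ?enum_uniq //.
  by move=> W1 W2; rewrite !mem_enum; apply: inj.
by rewrite /= ltnS; apply: filt_bound.
Qed.

Lemma width U : U \in Pk key ->
  red_degree (red_trigraph e) (Pk key) U <= 3 * max_degree e + 1.
Proof.
case/imsetP => y _ ->.
have Hn0 : 0 < #|T| by apply: leq_ltn_trans (pos_lt y).
set a := pos y %/ (L * 2) * (L * 2).
set l := minn (L * 2) (#|T| - a).
pose c v := (a + pos v) %% #|T|.
pose M v := [set W in Pk key | (W != F) &&
      [exists j : 'I_l, gg ((c v + j) %% #|T|) \in W]].
pose N := [set w | e x0 w].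
have sub : [set W in Pk key | qred (red_trigraph e) (fib key y) W] \subset
    F |: \bigcup_(v in N) M v.
  apply/subsetP => W; rewrite inE => /andP [WP Hq].
  move: Hq; rewrite /qred /tedge /= => /and3P [_ _ /existsP [u /andP [uU /existsP [w /andP [wW euw]]]]].
  rewrite in_setU1; case: (eqVneq W F) => [->|WF] //=.
  apply/bigcupP; exists (gg ((pos w + #|T| - pos u) %% #|T|)).
    by rewrite inE -e_gg ?pos_lt // !gg_pos.
  rewrite inE WP WF /=; apply/existsP.
  have Hu : pos u %/ (L * 2) = pos y %/ (L * 2).
    by apply: HB; rewrite ?pos_lt //; move: uU; rewrite inE => /eqP.
  have Hau : a + pos u %% (L * 2) = pos u.
    by rewrite /a -Hu -divn_eq.
  have Hj : pos u %% (L * 2) < l.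
    rewrite leq_min ltn_pmod ?muln_gt0 ?HL //=.
    by rewrite ltn_subRL Hau pos_lt.
  exists (Ordinal Hj) => /=.
  rewrite /c pos_gg ?ltn_pmod // modnDml -addnA (addnC (_ %% _)) addnA Hau.
  rewrite modnDmr.
  have -> : pos u + (pos w + #|T| - pos u) = pos w + #|T|.
    by have := pos_lt u; lia.
  by rewrite modnDr modn_small ?pos_lt // gg_pos.
apply: leq_trans (subset_leq_card sub) _.
rewrite cardsU1 addnC leq_add ?leq_b1 //.
apply: leq_trans (card_bigcup_le _ _) _.
apply: (@leq_trans (\sum_(v in N) 3)).
  apply: leq_sum => v _; apply: count3; first by rewrite ltn_pmod.
    exact: geq_minl.
  by apply: leq_trans (geq_minr _ _) _; apply: leq_subr.
rewrite sum_nat_const mulnC leq_mul2l /=.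
rewrite /max_degree /N; exact: (@leq_bigmax _ (fun v => #|[set w | e v w]|) x0).
Qed.

End Width.


Lemma Pk_ext key1 key2 : (forall p, p < #|T| -> key1 p = key2 p) ->
  Pk key1 = Pk key2.
Proof.
move=> H; apply/setP => C; apply/imsetP/imsetP => [[z _ ->]|[z _ ->]];
  exists z => //; apply/setP => x; rewrite !inE !H ?pos_lt //.
Qed.

Lemma merge_gen key h a b ya yb : a <> b -> key (pos ya) = a -> key (pos yb) = b ->
  (forall k1 k2, h k1 = h k2 <-> k1 = k2 \/ ((k1 = a \/ k1 = b) /\ (k2 = a \/ k2 = b))) ->
  merge_step (Pk key) (Pk (fun p => h (key p))).
Proof.
move=> Hab Ha Hb Hh.
have AB : fib key ya :|: fib key yb = fib (fun p => h (key p)) ya.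
  apply/setP => x; rewrite !inE Ha Hb.
  apply/orP/eqP => [[/eqP|/eqP] E|E].
  - by apply/Hh; right; lia.
  - by apply/Hh; right; lia.
  - by move/Hh: E; lia.
apply/existsP; exists (fib key ya); rewrite imset_f //=.
apply/existsP; exists (fib key yb); rewrite imset_f //=.
apply/andP; split.
  apply/eqP => E; have := fib_self key ya; rewrite E inE Ha Hb => /eqP; lia.
apply/eqP/setP => C; apply/idP/idP.
  case/imsetP => z _ ->.
  rewrite in_setU in_set1 !in_setD1.
  case: (boolP ((key (pos z) == a) || (key (pos z) == b))) => Hz.
    apply/orP; right; apply/eqP; rewrite AB.
    apply/setP => x; rewrite !inE; apply/eqP/eqP => E.
      by move/Hh: E => E; apply/Hh; move/orP: Hz => [/eqP|/eqP]; lia.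
    by move/Hh: E => E; apply/Hh; move/orP: Hz => [/eqP|/eqP]; lia.
  have -> : fib (fun p => h (key p)) z = fib key z.
    apply/setP => x; rewrite !inE; apply/eqP/eqP => E.
      by move/Hh: E => E; move: Hz; case: E => // [[]] _ [] -> ; rewrite eqxx ?orbT.
    by rewrite E.
  rewrite imset_f // andbT; apply/orP; left; apply/andP; split.
    apply/eqP => E; have := fib_self key z; rewrite E inE Hb => /eqP E'.
    by move: Hz; rewrite E' eqxx orbT.
  apply/eqP => E; have := fib_self key z; rewrite E inE Ha => /eqP E'.
  by move: Hz; rewrite E' eqxx.
rewrite in_setU in_set1 !in_setD1 => /orP [/and3P [CB CA /imsetP [z _ Cz]]|/eqP ->].
  have Hz : (key (pos z) != a) && (key (pos z) != b).
    apply/andP; split; apply/eqP => E.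
      by move/eqP: CA; apply; rewrite Cz; apply/setP => x; rewrite !inE E Ha.
    by move/eqP: CB; apply; rewrite Cz; apply/setP => x; rewrite !inE E Hb.
  apply/imsetP; exists z => //; rewrite Cz.
  apply/setP => x; rewrite !inE; apply/eqP/eqP => E; first by rewrite E.
  move/andP: Hz => [/eqP Hz1 /eqP Hz2].
  by move/Hh: E; lia.
by rewrite AB imset_f.
Qed.

Lemma merge_card key Q : merge_step (Pk key) Q -> #|Q| = #|Pk key|.-1.
Proof.
case/existsP => A /andP [AP /existsP [B /andP [BP /andP [AB /eqP ->]]]].
have nin : A :|: B \notin (Pk key :\ A) :\ B.
  rewrite !in_setD1; apply/negP => /and3P [_ H1 H2].
  case/imsetP: (AP) => z _ Az.
  have zA : z \in A by rewrite Az fib_self.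
  have := Pk_overlap H2 AP (setU1r_helper B zA) zA.
  by move/eqP: H1.
rewrite setUC cardsU1 nin (cardsD1 A (Pk key)) AP (cardsD1 B (Pk key :\ A)).
rewrite in_setD1 BP eq_sym AB /=.
by rewrite addnC /=; lia.
Qed.


Definition fk L t (p : nat) : nat :=
  if p %/ L < 2 * t then p %/ L %/ 2 else p %/ L - t.

Lemma fk_HA L t : 0 < L -> forall p, 0 < p -> p < #|T| -> ~~ (L %| p) ->
  fk L t p.-1 = fk L t p.
Proof.
move=> HL p H0 _ Hd.
have E : p.-1 %/ L = p %/ L by move: Hd; rewrite /dvdn => Hd; nia.
by rewrite /fk E.
Qed.

Lemma fk_HB L t : forall p q, p < #|T| -> q < #|T| -> fk L t p = fk L t q ->
  p %/ (L * 2) = q %/ (L * 2).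
Proof.
move=> p q _ _; rewrite !divnMA /fk; move: (p %/ L) (q %/ L) => a b.
by repeat (case: ifP => ?); lia.
Qed.

Lemma fk_merge L t : 0 < L -> (2 * t + 1) * L < #|T| ->
  merge_step (Pk (fk L t)) (Pk (fk L t.+1)).
Proof.
move=> HL Hlt.
pose h k := if k <= t then k else k.-1.
have -> : Pk (fk L t.+1) = Pk (fun p => h (fk L t p)).
  apply: Pk_ext => p _; rewrite /h /fk; move: (p %/ L) => q.
  case: (ltnP q (2 * t)) => ?; case: (ltnP q (2 * t.+1)) => ? /=; case: ifP => ?; lia.
have H1 : 2 * t * L < #|T| by apply: leq_ltn_trans Hlt; rewrite leq_mul2r leq_addr orbT.
apply: (@merge_gen _ h t t.+1 (gg (2 * t * L)) (gg ((2 * t + 1) * L))).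
- lia.
- by rewrite pos_gg // /fk mulnK //; repeat (case: ifP => ?); lia.
- by rewrite pos_gg // /fk mulnK //; repeat (case: ifP => ?); lia.
- move=> k1 k2; rewrite /h; by repeat (case: ifP => ?); lia.
Qed.

Lemma fk_norm L t : 0 < L -> #|T| <= (2 * t + 1) * L ->
  Pk (fk L t) = Pk (fk (L * 2) 0).
Proof.
move=> HL Hle; apply: Pk_ext => p Hp.
have Hq : p %/ L < 2 * t + 1 by rewrite ltn_divLR //; apply: leq_trans Hle.
rewrite /fk divnMA; move: Hq; move: (p %/ L) => q.
move=> Hq; rewrite muln0 ltn0 subn0; case: ifP => ?; lia.
Qed.

Lemma Pk_one key : 0 < #|T| -> (forall p, p < #|T| -> key p = key 0) -> #|Pk key| <= 1.
Proof.
move=> Hn H.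
have -> : Pk key = [set fib key x0].
  apply/setP => C; rewrite inE; apply/imsetP/eqP => [[z _ ->]|->]; last by exists x0.
  have P0 : pos x0 = 0 by rewrite -[x0]/(gg 0) pos_gg.
  by apply/setP => x; rewrite !inE P0 H ?pos_lt // [key (pos z)]H ?pos_lt.
by rewrite cards1.
Qed.

Definition Good (P : {set {set T}}) := exists L t, 0 < L /\ P = Pk (fk L t).

Lemma good_step P : Good P -> 1 < #|P| -> exists Q, merge_step P Q /\ Good Q.
Proof.
case=> L [t [HL ->]] H1.
case: (ltnP ((2 * t + 1) * L) #|T|) => c1.
  by exists (Pk (fk L t.+1)); split; [exact: fk_merge | exists L, t.+1].
rewrite (fk_norm HL c1) in H1 *.
have HL2 : 0 < L * 2 by rewrite muln_gt0 HL.
case: (ltnP ((2 * 0 + 1) * (L * 2)) #|T|) => c2.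
  by exists (Pk (fk (L * 2) 1)); split; [exact: fk_merge | exists (L * 2), 1].
exfalso.
have Hn : 0 < #|T| by apply: leq_trans (ltnW H1) _; apply: leq_trans (leq_imset_card _ _) _; apply: max_card.
have := @Pk_one (fk (L * 2) 0) Hn.
have HH : forall p, p < #|T| -> fk (L * 2) 0 p = fk (L * 2) 0 0.
  move=> p Hp; rewrite /fk div0n divn_small //.
  by move: c2 Hp; clear; lia.
by move/(_ HH); rewrite leqNgt H1.
Qed.

Lemma chain k : forall P, Good P -> #|P| = k.+1 ->
  exists s : seq {set {set T}}, [/\ size s = k.+1, nth set0 s 0 = P,
    (forall i, i < k -> merge_step (nth set0 s i) (nth set0 s i.+1)) &
    (forall Q, Q \in s -> Good Q)].
Proof.
elim: k => [|k IH] P GP HP.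
  exists [:: P]; split => // Q; rewrite inE => /eqP -> //.
have H1 : 1 < #|P| by rewrite HP.
have [Q [MQ GQ]] := good_step GP H1.
have HQ : #|Q| = k.+1.
  move: GP MQ => [L [t [_ E]]]; rewrite E => MQ.
  by rewrite (merge_card MQ) -E HP.
have [s [Hs H0 Hm Hg]] := IH Q GQ HQ.
exists (P :: s); split => //=; first by rewrite Hs.
  case=> [|i] Hi /=; first by rewrite H0.
  by apply: Hm.
by move=> R; rewrite inE => /orP [/eqP ->|/Hg].
Qed.

End Circ.


Lemma bigmin_le (I : finType) (P : pred I) (F : I -> nat) N i0 :
  P i0 -> \big[minn/N]_(i | P i) F i <= F i0.
Proof.
move=> Pi0; have : i0 \in index_enum I by rewrite mem_index_enum.
elim: (index_enum I) => // j r IH; rewrite inE big_cons => /orP [/eqP <-|/IH H].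
  by rewrite Pi0 geq_minl.
by case: ifP => _ //; apply: leq_trans (geq_minr _ _) H.
Qed.

Lemma bigmin_idx (I : finType) (P : pred I) (F : I -> nat) N :
  \big[minn/N]_(i | P i) F i <= N.
Proof.
elim: (index_enum I) => [|j r IH]; first by rewrite big_nil.
rewrite big_cons; case: ifP => _ //; apply: leq_trans (geq_minr _ _) IH.
Qed.

Theorem mainTheorem3 (T : finType) (e : rel T)
  (e_sym : symmetric e) (e_irr : irreflexive e) :
  circulant e -> stww e <= 3 * max_degree e + 1.
Proof.
case=> phi [autP cycP0].
case: (pickP T) => [x0 _|H0]; last first.
  apply: leq_trans (bigmin_idx _ _ _) _.
  by rewrite eq_card0.
have cycP : forall w, exists j, iter j phi x0 = w by move=> w; apply: cycP0.
have Hn : 0 < #|T| by apply/card_gt0P; exists x0.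
have Esing : singletons T = Pk phi x0 (fk 1 0).
  apply/setP => C; apply/imsetP/imsetP => [[y _ ->]|[y _ ->]]; exists y => //;
    apply/setP => x; rewrite !inE /fk !divn1 !muln0 !ltn0 !subn0 (inj_eq (pos_inj cycP)) //.
have Gs : Good phi x0 (singletons T) by rewrite Esing; exists 1, 0.
have Hc : #|singletons T| = (#|T|.-1).+1.
  by rewrite prednK // /singletons card_imset //; apply: set1_inj.
have [s [Hs H0 Hm Hg]] := chain cycP Gs Hc.
have Hs' : size s == #|T| by rewrite Hs prednK.
pose tt := Tuple Hs'.
have CS : contraction_seq tt.
  rewrite /contraction_seq Hn /= H0 eqxx /=; apply/forallP => i.
  by apply: Hm; rewrite ltn_ord.
rewrite /stww /tww. have := @bigmin_le _ (fun s => contraction_seq s) (fun s => cs_width (red_trigraph e) s) #|T| tt CS. move=> HH. apply: (leq_trans HH).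
rewrite /cs_width; apply/bigmax_leqP_seq => P Ps _.
have [L [t [HL EP]]] := Hg P Ps.
rewrite /max_red_degree; apply/bigmax_leqP => U HU.
rewrite EP in HU *.
apply: (width autP cycP HL _ _ HU).
  by move=> p; apply: (@fk_HA T L t HL).
by move=> p q; apply: fk_HB.
Qed.
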